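(* Let $\mathbf{V}\in\mathbb{R}^{n\times k}$ have orthonormal columns. Suppose $\mathbf{W}\in\mathbb{R}^{k\times k}$ satisfies $$\max_{i\in[n]}\Big\{\min_{l\in[k]}\|\mathbf{V}_{i,:}-\mathbf{W}_{l,:}\|\Big\}=\epsilon.$$ Then, provided $\epsilon<(3nk^2)^{-1}$, $$\min_{i,j\in[k],\,i\neq j}\|\mathbf{W}_{i,:}-\mathbf{W}_{j,:}\|\ge\sqrt{\frac{2}{n}}-\sqrt{12}\,k\,(3n\epsilon)^{1/4}.$$
   Context: $[n]=\{1,\dots,n\}$; $\|\cdot\|$ is the Euclidean norm; $\mathbf{V}_{i,:}$ denotes the $i$-th row of $\mathbf{V}$. *)

(* Defs.v *)
From HB Require Import structures.
From mathcomp Require Import all_boot all_order all_algebra.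
From mathcomp Require Import reals.
Set Implicit Arguments. Unset Strict Implicit. Unset Printing Implicit Defensive.
Import Order.TTheory GRing.Theory Num.Theory.
Local Open Scope ring_scope.

Definition rnorm (R : rcfType) (k : nat) (v : 'rV[R]_k) : R :=
  Num.sqrt (\sum_(j < k) v 0 j ^+ 2).

Definition rowdist (R : rcfType) (n k : nat) (V : 'M[R]_(n, k)) (W : 'M[R]_k)
  (i : 'I_n) (l : 'I_k) : R := rnorm (row i V - row l W).

(* min_{l in [k]} ||V_{i,:} - W_{l,:}||.  The seed of the fold is an upper bound
   (the max of the same terms), so for k >= 1 this is exactly the minimum. *)
Definition minrowdist (R : rcfType) (n k : nat) (V : 'M[R]_(n, k)) (W : 'M[R]_k)
  (i : 'I_n) : R :=
  \big[Num.min/ \big[Num.max/0]_(l < k) rowdist V W i l]_(l < k) rowdist V W i l.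

(* max_{i in [n]} min_{l in [k]} ||V_{i,:} - W_{l,:}||  (terms are >= 0, so the
   seed 0 is harmless for n >= 1). *)
Definition maxmindist (R : rcfType) (n k : nat) (V : 'M[R]_(n, k)) (W : 'M[R]_k) : R :=
  \big[Num.max/0]_(i < n) minrowdist V W i.

(* Main.v *)
Set Warnings "-all".
Require Import Defs.
From HB Require Import structures.
From mathcomp Require Import all_boot all_order all_algebra.
From mathcomp Require Import reals.
From mathcomp Require Import ring lra.
Import Order.TTheory GRing.Theory Num.Theory.
Local Open Scope ring_scope.

Lemma cs_unit (R : rcfType) (k : nat) (f u : 'I_k -> R) :
  \sum_j u j ^+ 2 = 1 -> (\sum_j f j * u j) ^+ 2 <= \sum_j f j ^+ 2.
Proof.
move=> hu.
have E : forall c, \sum_j (f j - c * u j) ^+ 2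
   = \sum_j f j ^+ 2 - 2 * c * (\sum_j f j * u j) + c ^+ 2 * \sum_j u j ^+ 2.
  move=> c; rewrite !mulr_sumr -sumrB -big_split /=.
  by apply: eq_bigr => j _; ring.
set c := \sum_j f j * u j.
have h0 : 0 <= \sum_j (f j - c * u j) ^+ 2 by apply: sumr_ge0 => j _; exact: sqr_ge0.
move: h0; rewrite E hu mulr1 -mulrA -expr2; lra.
Qed.

Lemma cs_abs (R : rcfType) (k : nat) (f u : 'I_k -> R) :
  \sum_j u j ^+ 2 = 1 -> `|\sum_j f j * u j| <= Num.sqrt (\sum_j f j ^+ 2).
Proof.
move=> hu; rewrite -sqrtr_sqr; apply: ler_wsqrtr; exact: cs_unit.
Qed.

Lemma le_bigmax_seed (R : realDomainType) (I : eqType) (s : seq I) (F : I -> R) x0 i :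
  i \in s -> F i <= \big[Num.max/x0]_(j <- s) F j.
Proof.
elim: s => [|a s IH] //; rewrite big_cons in_cons => /orP[/eqP<-|/IH h].
  by rewrite le_max lexx.
by rewrite le_max h orbT.
Qed.

Lemma bigmax_ge0 (R : realDomainType) (I : Type) (s : seq I) (F : I -> R) :
  0 <= \big[Num.max/0]_(j <- s) F j.
Proof.
elim: s => [|a s IH]; first by rewrite big_nil.
by rewrite big_cons le_max IH orbT.
Qed.

Lemma bigmin_attained (R : realDomainType) (I : Type) (s : seq I) (F : I -> R) x0 i0 :
  F i0 <= x0 -> exists l, F l <= \big[Num.min/x0]_(j <- s) F j.
Proof.
move=> h0; elim: s => [|a s [l IH]]; first by exists i0; rewrite big_nil.
rewrite big_cons; case: (leP (F a) (\big[Num.min/x0]_(j <- s) F j)) => h.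
  by exists a.
by exists l.
Qed.

Lemma exists_orth (R : rcfType) (k : nat) (W : 'M[R]_k) (i : 'I_k) :
  exists u : 'rV[R]_k, \sum_j u 0 j ^+ 2 = 1 /\
     forall l, l != i -> \sum_j W l j * u 0 j = 0.
Proof.
pose W0 := \matrix_(l, j) (if l == i then 0 else W l j).
have hdet : \det W0^T = 0.
  rewrite det_tr (expand_det_row _ i) big1 // => j _.
  by rewrite mxE eqxx mul0r.
have /det0P [v vn0 hv] : \det W0^T == 0 by rewrite hdet.
have horth : forall l, l != i -> \sum_j W l j * v 0 j = 0.
  move=> l hl; move/matrixP: hv => /(_ 0 l); rewrite !mxE => H; rewrite -[RHS]H.
  by apply: eq_bigr => j _; rewrite !mxE (negbTE hl) mulrC.
set q := \sum_j v 0 j ^+ 2.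
have q0 : 0 <= q by apply: sumr_ge0 => j _; exact: sqr_ge0.
have qn0 : q != 0.
  apply/negP => /eqP hq; move/negP: vn0; apply; apply/eqP/matrixP => a b.
  have := @psumr_eq0P _ _ _ (fun j => v 0 j ^+ 2) (fun j _ => sqr_ge0 (v 0 j)) hq b isT.
  rewrite ord1 mxE => /eqP; rewrite sqrf_eq0 => /eqP //.
have qp : 0 < q by rewrite lt_def qn0 q0.
exists ((Num.sqrt q)^-1 *: v); split.
  rewrite (eq_bigr (fun j => q^-1 * v 0 j ^+ 2)) => [|j _]; last first.
    by rewrite mxE exprMn exprVn sqr_sqrtr.
  by rewrite -mulr_sumr mulVf.
move=> l hl; rewrite (eq_bigr (fun j => (Num.sqrt q)^-1 * (W l j * v 0 j))) => [|j _].
  by rewrite -mulr_sumr horth // mulr0.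
by rewrite mxE mulrCA.
Qed.

Lemma sqrt12_ge3 (R : rcfType) : 3 <= Num.sqrt (12 : R).
Proof.
have h0 := sqrtr_ge0 (12 : R).
have h2 : Num.sqrt (12 : R) ^+ 2 = 12 by rewrite sqr_sqrtr.
nra.
Qed.

Theorem proposition5 (R : realType) (n k : nat) (V : 'M[R]_(n, k)) (W : 'M[R]_k)
  (eps : R) :
  V^T *m V = 1%:M ->
  maxmindist V W = eps ->
  eps < (3 * n%:R * k%:R ^+ 2)^-1 ->
  forall i j : 'I_k, i != j ->
    Num.sqrt (2 / n%:R) - Num.sqrt 12 * k%:R * Num.sqrt (Num.sqrt (3 * n%:R * eps))
      <= rnorm (row i W - row j W).
Proof.
move=> hV hmm heps i j hij.
have eps0 : 0 <= eps by rewrite -hmm /maxmindist; exact: (@bigmax_ge0 R).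
have hpick : forall r, exists l, rowdist V W r l <= eps.
  move=> r.
  have [l hl] := @bigmin_attained R _ (index_enum 'I_k) (rowdist V W r)
     (\big[Num.max/0]_(l < k) rowdist V W r l) i
     (@le_bigmax_seed R _ _ _ _ i (mem_index_enum i)).
  exists l; apply: (le_trans hl); rewrite -hmm.
  exact: (@le_bigmax_seed R _ _ (fun r => minrowdist V W r) _ r (mem_index_enum r)).
pose a r := if [pick l | rowdist V W r l <= eps] is Some l then l else i.
have ha : forall r, rowdist V W r (a r) <= eps.
  move=> r; rewrite /a; case: pickP => [l //|h].
  by have [l hl] := hpick r; rewrite h in hl.
set N : R := n%:R.
set K : R := k%:R.
have N1 : 1 <= N.
  rewrite /N ler1n lt0n; apply/negP => /eqP n0.
  move: heps; rewrite /N n0 mulr0 mul0r invr0 => h.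
  by rewrite ltNge eps0 in h.
have Np : 0 < N by lra.
have K1 : 1 <= K by rewrite /K ler1n; apply: (leq_ltn_trans (leq0n i) (ltn_ord i)).
have h3 : 3 * N * eps < 1.
  have P0 : 0 < 3 * N * K ^+ 2 by apply: mulr_gt0; [lra | apply: exprn_gt0; lra].
  have : eps * (3 * N * K ^+ 2) < 1 by rewrite -ltr_pdivlMr // div1r.
  have hK2 : 1 <= K ^+ 2 by rewrite -(expr1n R 2); apply: lerXn2r => //; rewrite ?nnegrE; lra.
  nra.
have eps3 : eps <= 3 by nra.
set s := Num.sqrt (3 * N * eps).
have s0 : 0 <= s := sqrtr_ge0 _.
have hs2 : s ^+ 2 = 3 * N * eps by rewrite sqr_sqrtr //; nra.
have s1 : s <= 1 by nra.
pose m l := \sum_(r < n) ((a r == l)%:R : R).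
have m0 : forall l, 0 <= m l by move=> l; apply: sumr_ge0 => r _; exact: ler0n.
have key : forall i0 j0 : 'I_k, i0 != j0 ->
    1 - 2 * s <= m i0 * \sum_t (W i0 t - W j0 t) ^+ 2.
  move=> i0 j0 hij0.
  have [u [hu horth]] := @exists_orth R k W i0.
  set c := \sum_t W i0 t * u 0 t.
  have hc : c = \sum_t (W i0 t - W j0 t) * u 0 t.
    rewrite (eq_bigr (fun t => W i0 t * u 0 t - W j0 t * u 0 t)) => [|t _]; last by rewrite mulrBl.
    by rewrite sumrB (horth j0) ?subr0 // eq_sym.
  have hcD : c ^+ 2 <= \sum_t (W i0 t - W j0 t) ^+ 2.
    by rewrite hc; apply: (@cs_unit R k (fun t => W i0 t - W j0 t) (fun t => u 0 t)).
  pose x r := \sum_t V r t * u 0 t.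
  pose y r := \sum_t W (a r) t * u 0 t.
  have hx : \sum_r x r ^+ 2 = 1.
    have E : ((V *m u^T)^T *m (V *m u^T)) 0 0 = (u *m u^T) 0 0.
      by rewrite trmx_mul trmxK mulmxA -(mulmxA u) hV mulmx1.
    move: E; rewrite !mxE -hu => E.
    rewrite (eq_bigr (fun r => (V *m u^T)^T 0 r * (V *m u^T) r 0)).
      rewrite E; apply: eq_bigr => t _; by rewrite !mxE expr2.
    move=> r _; rewrite !mxE expr2 /x; congr (_ * _); apply: eq_bigr => t _; by rewrite !mxE.
  have hxy : forall r, `|x r - y r| <= eps.
    move=> r; apply: le_trans (ha r).
    rewrite /x /y -sumrB.
    rewrite (eq_bigr (fun t => (V r t - W (a r) t) * u 0 t)) => [|t _]; last by rewrite mulrBl.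
    have := @cs_abs R k (fun t => V r t - W (a r) t) (fun t => u 0 t) hu.
    suff -> : Num.sqrt (\sum_j (V r j - W (a r) j) ^+ 2) = rowdist V W r (a r) by [].
    rewrite /rowdist /rnorm; congr Num.sqrt; apply: eq_bigr => t _; by rewrite !mxE.
  have hy : forall r, y r ^+ 2 = (a r == i0)%:R * c ^+ 2.
    move=> r; rewrite /y; case: eqP => [->|/eqP hne]; first by rewrite mul1r.
    by rewrite horth // mul0r expr2 mulr0.
  have hS : \sum_r y r ^+ 2 = m i0 * c ^+ 2.
    by rewrite (eq_bigr _ (fun r _ => hy r)) -mulr_suml.
  have hsum : 1 - m i0 * c ^+ 2 <= 2 * eps * \sum_r `|x r|.
    rewrite -hx -hS -sumrB mulr_sumr; apply: ler_sum => r _.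
    have h1 : x r * (x r - y r) <= `|x r| * eps.
      apply: le_trans (ler_norm _) _; rewrite normrM; apply: ler_wpM2l => //.
    have h2 : 0 <= (x r - y r) ^+ 2 := sqr_ge0 _.
    nra.
  have hsT : s * (2 * eps * \sum_r `|x r|) <= 2 * s ^+ 2.
    have h1 : s * (2 * eps * \sum_r `|x r|) <= \sum_(r < n) (s ^+ 2 * x r ^+ 2 + eps ^+ 2).
      rewrite !mulr_sumr; apply: ler_sum => r _.
      have h2 : 0 <= (s * `|x r| - eps) ^+ 2 := sqr_ge0 _.
      have h3' : `|x r| ^+ 2 = x r ^+ 2 := real_normK (num_real _).
      nra.
    apply: (le_trans h1); rewrite big_split /= -mulr_sumr hx sumr_const card_ord.
    rewrite -mulr_natr -/N.
    have : eps ^+ 2 * N <= s ^+ 2 by rewrite hs2; nra.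
    nra.
  have h2e : 2 * eps * \sum_r `|x r| <= 2 * s.
    have T0 : 0 <= \sum_r `|x r| by apply: sumr_ge0 => r _.
    move: s0; rewrite le0r => /orP [/eqP s00|sp].
      have e00 : eps = 0.
        move: hs2; rewrite s00 expr0n /= => /esym /eqP; rewrite !mulf_eq0 => /orP[/orP[]|] /eqP //.
          by move=> h; lra.
        by move=> h; lra.
      rewrite e00 s00; lra.
    rewrite -(ler_pM2l sp); apply: (le_trans hsT); rewrite expr2; lra.
  have : m i0 * c ^+ 2 <= m i0 * \sum_t (W i0 t - W j0 t) ^+ 2 by apply: ler_wpM2l.
  lra.
set D := \sum_t (W i t - W j t) ^+ 2.
have D0 : 0 <= D by apply: sumr_ge0 => t _; exact: sqr_ge0.
have hD : rnorm (row i W - row j W) = Num.sqrt D.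
  by rewrite /rnorm; congr Num.sqrt; apply: eq_bigr => t _; rewrite !mxE.
have ki := key i j hij.
have hji : j != i by rewrite eq_sym.
have kj := key j i hji.
have DD : \sum_t (W j t - W i t) ^+ 2 = D.
  by apply: eq_bigr => t _; rewrite -opprB sqrrN.
rewrite DD in kj.
have mij : m i + m j <= N.
  rewrite /m -big_split /= /N.
  have -> : (n%:R : R) = \sum_(r < n) 1 by rewrite sumr_const card_ord.
  apply: ler_sum => r _.
  case: (eqVneq (a r) i) => [->|_]; last by case: (a r == j); rewrite /= ?add0r ?addr0 ?ler01 ?lexx.
  by rewrite (negbTE hij) addr0.
have hnD : 2 * (1 - 2 * s) <= N * D.
  have : (m i + m j) * D <= N * D by apply: ler_wpM2r.
  rewrite mulrDl -/D in ki *; lra.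
rewrite hD.
set g := Num.sqrt (2 / N).
have g0 : 0 <= g := sqrtr_ge0 _.
have g2 : g ^+ 2 = 2 / N by rewrite sqr_sqrtr // divr_ge0 // ltW.
have gN : g ^+ 2 * N = 2 by rewrite g2 mulfVK // lt0r_neq0.
have g15 : g <= 3 / 2.
  have : g ^+ 2 <= 2 by rewrite g2 ler_pdivrMr //; nra.
  nra.
set ss := Num.sqrt s.
have ss0 : 0 <= ss := sqrtr_ge0 _.
have ss2 : ss ^+ 2 = s by rewrite sqr_sqrtr.
have sss : s <= ss by nra.
have s12 : 3 <= Num.sqrt (12 : R) := sqrt12_ge3 R.
have step1 : g - Num.sqrt 12 * K * ss <= g * (1 - 2 * s).
  have : g * (2 * s) <= Num.sqrt 12 * K * ss.
    have h1 : g * (2 * s) <= 3 * ss by nra.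
    apply: (le_trans h1).
    have : 3 * ss <= Num.sqrt 12 * ss by nra.
    have : Num.sqrt 12 * ss <= Num.sqrt 12 * K * ss.
      have h12 : 0 <= Num.sqrt (12 : R) * ss by apply: mulr_ge0 => //; exact: sqrtr_ge0.
      rewrite mulrAC; move: h12; set z := Num.sqrt 12 * ss => h12.
      nra.
    lra.
  lra.
apply: (le_trans step1).
case: (lerP (1 - 2 * s) 0) => h12.
  apply: le_trans (sqrtr_ge0 _); nra.
rewrite -(ger0_norm (_ : 0 <= g * (1 - 2 * s))); last by nra.
rewrite -sqrtr_sqr; apply: ler_wsqrtr.
have : (g * (1 - 2 * s)) ^+ 2 * N <= D * N.
  rewrite exprMn mulrAC gN; nra.
rewrite ler_pM2r //.
Qed.
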